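(* Let $(\mathbb S,+,\cdot)$ be a Commutative S-Structure which is Wheel Distributive and satisfies $0\in\mathbb S_0$. Then $(\mathbb S,+,\cdot)$ is Coordinated.
   Context: An S-Structure is a triple $(\mathbb S,+,\cdot)$ where $\mathbb S$ is a set and $+,\cdot$ are binary operations on $\mathbb S$ such that: $(\mathbb S,+)$ is a commutative group with identity $0$ (the inverse of $s$ is written $-s$, and $s-t:=s+(-t)$); $\mathbb S$ is closed under $\cdot$; and there exists $s\in\mathbb S$ with $0\cdot s\neq 0$ or $s\cdot 0\neq 0$. Multiplication binds tighter than addition. It is Commutative if $s\cdot t=t\cdot s$ for all $s,t\in\mathbb S$. For a Commutative S-Structure and $\alpha\in\mathbb S$, put $\mathbb S_\alpha=\{s\in\mathbb S:0\cdot s=s\cdot 0=\alpha\}$ and $\Lambda=\{\alpha\in\mathbb S:\mathbb S_\alpha\neq\emptyset\}$. The structure is Wheel Distributive if $s\cdot(t+r)+(s\cdot 0)=(s\cdot t)+(s\cdot r)$ for all $s,t,r\in\mathbb S$. If $\mathbb S_0\neq\emptyset$ and $\alpha\in\Lambda$, an element $q\in\mathbb S_\alpha$ is a Base for $\mathbb S_\alpha$ if (1) $q+\beta\in\mathbb S_\alpha$ for every $\beta\in\mathbb S_0$, and (2) every $s\in\mathbb S_\alpha$ can be written $s=q+\beta$ for some $\beta\in\mathbb S_0$. The structure is Coordinated if $\mathbb S_0\neq\emptyset$ and for every $\alpha\in\Lambda$ there exists a Base for $\mathbb S_\alpha$. *)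

(* Defs.v *)
Record SStructure {S : Type} (add mul : S -> S -> S) (zero : S) (opp : S -> S)
  : Prop := {
  ss_addA : forall a b c, add a (add b c) = add (add a b) c;
  ss_addC : forall a b, add a b = add b a;
  ss_add0 : forall a, add zero a = a;
  ss_addN : forall a, add (opp a) a = zero;
  ss_nontriv : exists s, mul zero s <> zero \/ mul s zero <> zero
}.

Definition Commutative {S : Type} (mul : S -> S -> S) : Prop :=
  forall s t, mul s t = mul t s.

Definition S_at {S : Type} (mul : S -> S -> S) (zero alpha s : S) : Prop :=
  mul zero s = alpha /\ mul s zero = alpha.

Definition Lambda {S : Type} (mul : S -> S -> S) (zero alpha : S) : Prop :=
  exists s, S_at mul zero alpha s.

Definition WheelDistributive {S : Type} (add mul : S -> S -> S) (zero : S)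
  : Prop :=
  forall s t r, add (mul s (add t r)) (mul s zero) = add (mul s t) (mul s r).

Definition IsBase {S : Type} (add mul : S -> S -> S) (zero alpha q : S)
  : Prop :=
  S_at mul zero alpha q /\
  (forall beta, S_at mul zero zero beta -> S_at mul zero alpha (add q beta)) /\
  (forall s, S_at mul zero alpha s ->
     exists beta, S_at mul zero zero beta /\ s = add q beta).

Definition Coordinated {S : Type} (add mul : S -> S -> S) (zero : S) : Prop :=
  (exists s, S_at mul zero zero s) /\
  (forall alpha, Lambda mul zero alpha -> exists q, IsBase add mul zero alpha q).

(* Main.v *)
Require Import Defs.

Theorem theorem2p4p1 (S : Type) (add mul : S -> S -> S) (zero : S)
  (opp : S -> S) :
  SStructure add mul zero opp ->
  Commutative mul ->
  WheelDistributive add mul zero ->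
  S_at mul zero zero zero ->
  Coordinated add mul zero.
Proof.
  intros [hA hC h0 hN _] hcom hwd [h00 _].
  assert (hr0 : forall a, add a zero = a) by (intro a; rewrite hC; apply h0).
  assert (hadd : forall t r, mul zero (add t r) = add (mul zero t) (mul zero r)).
  { intros t r. rewrite <- hwd, h00, hr0. reflexivity. }
  assert (hsN : forall a, add a (opp a) = zero) by (intro a; rewrite hC; apply hN).
  split.
  - exists zero. split; assumption.
  - intros alpha [s [hs1 hs2]]. exists s. split; [split; assumption|]. split.
    + intros beta [hb1 hb2].
      assert (e : mul zero (add s beta) = alpha) by (rewrite hadd, hs1, hb1; apply hr0).
      split; [exact e | rewrite hcom; exact e].
    + intros s' [hs'1 hs'2]. exists (add s' (opp s)).
      assert (e : mul zero (add s' (opp s)) = zero).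
      { rewrite hadd, hs'1, <- hs1, <- hadd, hsN. exact h00. }
      split; [split; [exact e | rewrite hcom; exact e]|].
      rewrite (hC s' (opp s)), hA, hsN, h0. reflexivity.
Qed.
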